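(* Let $Y_1,Y_2,\ldots$ be i.i.d. Bernoulli$(1/2)$ and let $(Z^k)_k$ be generated by the bit-drop scheme described in the context, independently of $(Y_i)$. For integers $l\ge1$, $k\ge0$ let $L^a_l(k)$ be the length of a longest common subsequence of $Z^k$ and $Y_1\ldots Y_l$. There exists a function $\delta:\mathbb{R}\to\mathbb{R}$ with $\lim_{\epsilon\to0}\delta(\epsilon)=0$ such that for every $\epsilon>0$ there are constants $c>0$, $C>0$ (possibly depending on $\epsilon$ but not on $l$) with $$P\Big(L^a_l\big(\lfloor 2l(1-\delta(\epsilon))\rfloor\big)>l(1-\epsilon)\Big)\leq Ce^{-cl}\quad\text{for all } l>0.$$
   Context: Bit-drop scheme: let $V_1,V_2,\ldots$ be i.i.d. Bernoulli$(1/2)$ and let $T_3,T_4,\ldots$ be independent, independent of $(V_k)$, with $T_{k+1}$ uniform on $\{2,\ldots,k\}$. Set $Z^2:=V_1V_2$ and, given $Z^k=Z^k_1\ldots Z^k_k$, define $Z^{k+1}_j:=Z^k_j$ for $j<T_{k+1}$, $Z^{k+1}_{T_{k+1}}:=V_{k+1}$, $Z^{k+1}_j:=Z^k_{j-1}$ for $T_{k+1}<j\le k+1$. Convention: $Z^0$ empty, $Z^1:=V_1$. (Each $Z^k$ is a uniformly random binary word of length $k$.) *)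

(* Defs.v *)
From HB Require Import structures.
From mathcomp Require Import all_boot all_order all_algebra.
From mathcomp Require Import all_classical all_reals all_analysis.
Set Implicit Arguments. Unset Strict Implicit. Unset Printing Implicit Defensive.
Import Order.TTheory GRing.Theory Num.Theory.
Local Open Scope ring_scope.

(* Bit-drop scheme, 1-indexed: V j = V_j, T j = T_j.
   Z^0 = [::], Z^1 = V_1, Z^2 = V_1 V_2, and Z^{k+1} is Z^k with V_{k+1}
   inserted at (1-based) position T_{k+1}. *)
Fixpoint bitdrop (V : nat -> bool) (T : nat -> nat) (k : nat) : seq bool :=
  match k with
  | 0 => [::]
  | 1 => [:: V 1%N]
  | 2 => [:: V 1%N; V 2%N]
  | k'.+1 => let z := bitdrop V T k' in
             take (T k'.+1).-1 z ++ V k'.+1 :: drop (T k'.+1).-1 z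
  end.

Definition lcs (a b : seq bool) : nat :=
  (\max_(m : (size a).-tuple bool | subseq (mask m a) b) size (mask m a))%N.

(* Finite sample space for the variables relevant at parameters (l, k):
   (Y_1..Y_l, V_1..V_k, T_1..T_k) (T_1, T_2 are dummies fixed to 0). *)
Definition Omega (l k : nat) : finType :=
  (l.-tuple bool * k.-tuple bool * k.-tuple 'I_k)%type.

(* T_j is uniform on {2,...,j-1} for j >= 3. *)
Definition admissibleT (k : nat) (t : k.-tuple 'I_k) : bool :=
  [forall i : 'I_k, if (3 <= i.+1)%N then (2 <= tnth t i <= i)%N
                    else (tnth t i == 0 :> nat)].

Definition Zof (k : nat) (v : seq bool) (t : seq nat) : seq bool :=
  bitdrop (fun j => nth false v j.-1) (fun j => nth 0%N t j.-1) k.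

Definition La (l k : nat) (w : Omega l k) : nat :=
  lcs (Zof k w.1.2 (map val w.2)) w.1.1.

(* The (product, hence uniform on the admissible set) probability law of
   (Y_1..Y_l, V_1..V_k, T_3..T_k). *)
Definition prob (R : realType) (l k : nat) (E : pred (Omega l k)) : R :=
  (#|[set w : Omega l k | admissibleT w.2 & E w]|)%:R
  / (#|[set w : Omega l k | admissibleT w.2]|)%:R.

(* Main.v *)
Require Import Defs.
From HB Require Import structures.
From mathcomp Require Import all_boot all_order all_algebra.
From mathcomp Require Import all_classical all_reals all_analysis.
From mathcomp Require Import ring lra.
Import Order.TTheory GRing.Theory Num.Theory.
Set Implicit Arguments. Unset Strict Implicit. Unset Printing Implicit Defensive.

Lemma size_bitdrop V T k : size (bitdrop V T k) = k.
Proof.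
elim: k => [|[|[|k]] IH] //.
rewrite [bitdrop _ _ _]/= size_cat /= addnS -size_cat cat_take_drop IH //.
Qed.

Lemma bitdrop_inj V V' T k : bitdrop V T k = bitdrop V' T k ->
  forall j, (0 < j <= k)%N -> V j = V' j.
Proof.
elim: k => [|[|[|k]] IH].
- by move=> _ j /andP[/leq_trans h /h].
- by move=> [e] j; rewrite -eqn_leq => /eqP <-.
- move=> [e1 e2] j /andP[j0 j2]; case: j j0 j2 => [|[|[|j]]] //.
- rewrite [bitdrop V _ _]/= [bitdrop V' _ _]/=.
  set z := bitdrop V T k.+2; set z' := bitdrop V' T k.+2 => e.
  have sz : size (take (T k.+3).-1 z) = size (take (T k.+3).-1 z').
    by rewrite !size_take /z /z' !size_bitdrop.
  move/eqP: e; rewrite eqseq_cat // => /andP[/eqP e1] /=.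
  rewrite eqseq_cons => /andP[/eqP e2 /eqP e3].
  have ez : z = z' by rewrite -(cat_take_drop (T k.+3).-1 z) e1 e3 cat_take_drop.
  move=> j /andP[j0]; rewrite leq_eqVlt => /orP[/eqP -> //|jk].
  by apply: IH => //; rewrite j0.
Qed.


Section Sums.
Local Open Scope ring_scope.
Variable R : realType.

Lemma sum_tuple0 (F : seq bool -> R) : \sum_(z : 0.-tuple bool) F z = F [::].
Proof. by rewrite (big_pred1 [tuple]) // => z; apply/esym/eqP/tuple0. Qed.

Lemma sum_tupleS n (F : seq bool -> R) :
  \sum_(z : n.+1.-tuple bool) F z = \sum_(c : bool) \sum_(z : n.-tuple bool) F (c :: z).
Proof.
rewrite pair_bigA /=.
rewrite (reindex (fun p : bool * n.-tuple bool => [tuple of p.1 :: p.2])) //=.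
exists (fun z : n.+1.-tuple bool => (thead z, [tuple of behead z])).
  by move=> [c z] _ /=; congr pair; apply: val_inj.
by move=> z _; rewrite [in RHS](tuple_eta z); apply: val_inj.
Qed.

Lemma lemA (x : R) : 1 <= x -> forall k (s : seq bool),
  (\sum_(z : k.-tuple bool) (subseq s z)%:R) * x ^+ size s <= (1 + x) ^+ k.
Proof.
move=> x1; have x0 : 0 <= x by apply: le_trans x1.
elim=> [|k IH] s.
  rewrite (sum_tuple0 (fun z : seq bool => ((subseq s z : nat)%:R : R))) expr0; case: s => [|a s] /=; first by rewrite mul1r.
  by rewrite mul0r.
rewrite (sum_tupleS _ (fun z : seq bool => ((subseq s z : nat)%:R : R))) big_bool /=.
case: s => [|a s].
  have := IH [::]; rewrite /= expr0 !mulr1 exprS => h.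
  have e : \sum_(z : k.-tuple bool) ((subseq [::] z : nat)%:R : R) = \sum_(z : k.-tuple bool) 1.
    by apply: eq_bigr => z _; rewrite sub0seq.
  rewrite e in h.
  rewrite mulrDl mul1r; apply: lerD => //.
  by apply: le_trans h _; rewrite ler_peMl // ?exprn_ge0 ?addr_ge0.
rewrite /= exprS mulrDl.
have h1 := IH s; have h2 := IH (a :: s).
rewrite /= in h2.
case: a h2 => h2 /=; [rewrite exprS mulrDl mul1r addrC; apply: lerD|
  rewrite exprS mulrDl mul1r; apply: lerD].
- by rewrite -exprS.
- by rewrite mulrCA; apply: ler_wpM2l.
- by rewrite -exprS.
- by rewrite mulrCA; apply: ler_wpM2l.
Qed.

Lemma lemB0 (y : R) l : \sum_(b : l.-tuple bool) y ^+ (count negb b) = (1 + y) ^+ l.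
Proof.
elim: l => [|l IH]; first by rewrite (sum_tuple0 (fun b => y ^+ count negb b)).
rewrite (sum_tupleS _ (fun b => y ^+ count negb b)) big_bool /=.
under eq_bigr do rewrite add0n.
under [X in _ + X]eq_bigr do rewrite add1n exprS.
by rewrite -mulr_sumr IH exprS mulrDl mul1r.
Qed.

Lemma lemB (y : R) l n : 0 <= y ->
  \sum_(b : l.-tuple bool) ((count id b == n : nat)%:R * y ^+ (l - n)) <= (1 + y) ^+ l.
Proof.
move=> y0; rewrite -lemB0; apply: ler_sum => b _.
case: eqP => [e|_]; last by rewrite mul0r exprn_ge0.
have h := count_predC id b; rewrite size_tuple e in h.
have -> : (l - n = count negb b)%N.
  by rewrite -[X in (X - n)%N]h addKn.
by rewrite mul1r.
Qed.
End Sums.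
Lemma lcs_le a b : (lcs a b <= size a)%N.
Proof.
apply/bigmax_leqP => m _; apply: size_subseq; exact: mask_subseq.
Qed.

Lemma lcs_witness l (a : seq bool) (y : l.-tuple bool) n :
  (n <= lcs a y)%N -> exists b : l.-tuple bool, (count id b == n) && subseq (mask b y) a.
Proof.
move=> h.
have [m /andP[Pm Sm]] : exists m : (size a).-tuple bool,
    subseq (mask m a) y && (n <= size (mask m a))%N.
  apply/existsP; case: existsP => // H; exfalso.
  suff : (lcs a y < n)%N by rewrite ltnNge h.
  case: n h H => [|n] h H.
    by exfalso; apply: H; exists (nseq_tuple (size a) false); rewrite /= mask_false sub0seq.
  rewrite ltnS; apply/bigmax_leqP => m' P'.
  by rewrite leqNgt; apply/negP => Hm; apply: H; exists m'; rewrite P' Hm.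
set u := mask m a.
have ua : subseq u a by exact: mask_subseq.
have su : size (take n u) = n by rewrite size_takel.
have tb : subseq (take n u) y := subseq_trans (take_subseq u n) Pm.
case/subseqP: tb => mb smb emb.
have smb' : size mb == l by rewrite smb size_tuple.
exists (Tuple smb'); apply/andP; split.
  by rewrite /= -(size_mask (s:=y)) ?smb ?size_tuple // -emb su.
by rewrite /= -emb; exact: subseq_trans (take_subseq u n) ua.
Qed.
Lemma card_sum (T : finType) (p : pred T) : #|[set w | p w]| = (\sum_w (p w : nat))%N.
Proof. by rewrite cardsE -sum1_card big_mkcond. Qed.

Lemma sumOmega l k (F : Omega l k -> nat) :
  (\sum_w F w = \sum_(t : k.-tuple 'I_k) \sum_(y : l.-tuple bool) \sum_(v : k.-tuple bool) F ((y, v), t))%N.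
Proof.
rewrite (eq_bigr (fun w => F (w.1, w.2))); last by case.
rewrite -(pair_bigA _ (fun yv t => F (yv, t))) /= exchange_big /=.
apply: eq_bigr => t _.
rewrite (eq_bigr (fun w => F ((w.1, w.2), t))); last by case.
by rewrite -(pair_bigA _ (fun y v => F ((y, v), t))).
Qed.

Definition Q l k n : nat :=
  \sum_(y : l.-tuple bool) \sum_(z : k.-tuple bool) (n <= lcs z y).

Definition hz k (t : seq nat) (v : k.-tuple bool) : k.-tuple bool :=
  Tuple (introT eqP (size_bitdrop (fun j => nth false v j.-1) (fun j => nth 0%N t j.-1) k)).

Lemma hz_inj k t : injective (@hz k t).
Proof.
move=> v v' /(congr1 val) /= e.
have := bitdrop_inj e => h.
apply: eq_from_tnth => i; rewrite !(tnth_nth false).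
have := h i.+1; rewrite /= ltn_ord => /(_ isT) //.
Qed.

Lemma sum_Zof l k t (G : seq bool -> l.-tuple bool -> nat) :
  (\sum_(y : l.-tuple bool) \sum_(v : k.-tuple bool) G (Zof k v t) y =
   \sum_(y : l.-tuple bool) \sum_(z : k.-tuple bool) G z y)%N.
Proof.
apply: eq_bigr => y _.
by rewrite [RHS](reindex_inj (@hz_inj k t)).
Qed.

Lemma num_le l k n (P : pred (Omega l k)) : (forall w, P w -> n <= La w)%N ->
  (#|[set w : Omega l k | admissibleT w.2 & P w]| <=
   #|[set t : k.-tuple 'I_k | admissibleT t]| * Q l k n)%N.
Proof.
move=> HP.
rewrite !card_sum sumOmega big_distrl /=.
apply: leq_sum => t _.
rewrite /Q -(@sum_Zof l k (map val t) (fun z y => (n <= lcs z y)%N)) big_distrr /=.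
apply: leq_sum => y _; rewrite big_distrr /=; apply: leq_sum => v _.
case: (admissibleT t) => //=; rewrite !mul1n.
case Pw: (P _) => //.
by have := HP _ Pw; rewrite /La /= => ->.
Qed.

Lemma den_eq l k :
  #|[set w : Omega l k | admissibleT w.2]| =
   (#|[set t : k.-tuple 'I_k | admissibleT t]| * (2 ^ l * 2 ^ k))%N.
Proof.
rewrite !card_sum sumOmega big_distrl /=.
apply: eq_bigr => t _.
under eq_bigr do rewrite sum_nat_const.
rewrite sum_nat_const !card_tuple card_bool mulnC.
by rewrite mulnAC [RHS]mulnC; congr (_ * _); exact: mulnC.
Qed.

Lemma Qy_le l k n (y : l.-tuple bool) :
  (\sum_(z : k.-tuple bool) (n <= lcs z y) <=
   \sum_(b : l.-tuple bool) \sum_(z : k.-tuple bool) ((count id b == n) * subseq (mask b y) z))%N.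
Proof.
rewrite exchange_big /=; apply: leq_sum => z _.
case h: (n <= lcs z y)%N => //.
have [b /andP[cb sb]] := lcs_witness h.
by rewrite (bigD1 b) //= cb sb.
Qed.

Section Real.
Variable R : realType.
Local Open Scope ring_scope.

Lemma prob_le l k n (P : pred (Omega l k)) : (forall w, P w -> n <= La w)%N ->
  prob R P <= (Q l k n)%:R / (2 ^ l * 2 ^ k)%:R.
Proof.
move=> HP; have := num_le HP; rewrite /prob den_eq.
set num := #|[set w | _ & _]|; set A := #|[set t | _]|; set N := (2 ^ l * 2 ^ k)%N => h.
have N0 : (0 < N)%N by rewrite muln_gt0 !expn_gt0.
case: (posnP A) => A0.
  move: h; rewrite A0 mul0n leqn0 => /eqP ->.
  by rewrite mul0r divr_ge0.
have -> : (Q l k n)%:R / N%:R = (A * Q l k n)%:R / (A * N)%:R :> R.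
  rewrite (natrM _ A (Q l k n)) (natrM _ A N) invfM mulrACA divff ?mul1r // pnatr_eq0 -lt0n //.
apply: ler_wpM2r; first by rewrite invr_ge0.
by rewrite ler_nat.
Qed.

Lemma Q_le l k n (x y : R) : 1 <= x -> 0 < y ->
  (Q l k n)%:R <= (2 ^ l)%:R * ((1 + y) ^+ l / y ^+ (l - n)) * ((1 + x) ^+ k / x ^+ n).
Proof.
move=> x1 y0.
have x0 : 0 < x by apply: lt_le_trans x1.
rewrite /Q natr_sum.
have -> : (2 ^ l)%:R = \sum_(y : l.-tuple bool) (1 : R).
  by rewrite sumr_const card_tuple card_bool natrX.
rewrite !mulr_suml; apply: ler_sum => yy _; rewrite mul1r.
have := Qy_le k n yy; rewrite -(ler_nat R) => /le_trans; apply.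
rewrite natr_sum.
apply: le_trans (_ : \sum_(b : l.-tuple bool) ((count id b == n : nat)%:R * y ^+ (l - n)) / y ^+ (l - n) * ((1 + x) ^+ k / x ^+ n) <= _); last first.
  have x0' : 0 <= x := ltW x0.
  rewrite -mulr_suml -mulr_suml; apply: ler_wpM2r.
    by apply: divr_ge0; apply: exprn_ge0 => //; apply: addr_ge0.
  apply: ler_wpM2r; first by rewrite invr_ge0 exprn_ge0 // ltW.
  by apply: lemB; rewrite ltW.
apply: ler_sum => b _.
rewrite mulrK; last by rewrite unitfE expf_neq0 // gt_eqF.
case: eqP => [cb|_]; last first.
  rewrite mul0r; apply: le_trans (_ : (\sum_(z : k.-tuple bool) (0 : R)) <= 0).
    by rewrite natr_sum; apply: ler_sum => z _; rewrite mul0n.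
  by rewrite big1.
rewrite mul1r natr_sum.
under eq_bigr do rewrite mul1n.
rewrite ler_pdivlMr ?exprn_gt0 //.
have := lemA x1 k (mask b yy).
by rewrite size_mask ?size_tuple // cb.
Qed.
End Real.
Section Fin.
Local Open Scope ring_scope.
Variable R : realType.

Lemma pow_le (a b : R) m : 0 <= a -> a <= b -> a ^+ m <= b ^+ m.
Proof.
move=> a0 ab; elim: m => [|m IH]; first by rewrite !expr0.
by rewrite !exprS; apply: ler_pM => //; apply: exprn_ge0.
Qed.

Lemma pow_expR (a e : R) m : 0 <= a -> a <= expR e -> a ^+ m <= expR (m%:R * e).
Proof. by move=> a0 ae; rewrite expRM_natl; apply: pow_le. Qed.

Lemma poly_ineq (s a : R) : 0 < s -> a * (1 + 2 * s) = 2 * s ->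
  -4 * s^+2 + 2*s - 2*s^+5 - (1 - s^+4) * a <= 0.
Proof.
move=> s0 ha.
have h : 0 <= s^+3 by rewrite exprn_ge0 // ltW.
have h2 : 0 <= s^+6 by rewrite exprn_ge0 // ltW.
have e : (-4 * s^+2 + 2*s - 2*s^+5 - (1 - s^+4) * a) * (1 + 2 * s) = - 8 * s^+3 - 4 * s^+6.
  by rewrite mulrBl -mulrA ha; ring.
have p : 0 < 1 + 2 * s by lra.
rewrite -(ler_pM2r p) mul0r e; lra.
Qed.

Lemma final_bound (s : R) l n k : 0 < s < 1 ->
  ((l - n)%N)%:R <= s^+4 * l%:R -> l%:R * (1 - s^+4) <= n%:R ->
  k%:R <= 2 * l%:R * (1 - (s^+4 + 4 * s)) ->
  (2 ^ l)%:R * ((1 + s^+2) ^+ l / (s^+2) ^+ (l - n)) * ((1 + (1 + 2 * s)) ^+ k / (1 + 2 * s) ^+ n)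
    / (2 ^ l * 2 ^ k)%:R <= expR (- (2 * s^+2 * l%:R)).
Proof.
move=> /andP[s0 s1] hln hn hk.
set y := s ^+ 2; set x := 1 + 2 * s.
have y0 : 0 < y by rewrite exprn_gt0.
have x0 : 0 < x by rewrite /x; lra.
have -> : 1 + x = 2 * (1 + s) by rewrite /x; ring.
rewrite natrM !natrX [(2 * (1 + s)) ^+ k]exprMn.
set P := (2 : R) ^+ l; set K := (2 : R) ^+ k.
have P0 : P != 0 by rewrite expf_neq0.
have K0 : K != 0 by rewrite expf_neq0.
have -> : P * ((1 + y) ^+ l / y ^+ (l - n)) * (K * (1 + s) ^+ k / x ^+ n) / (P * K)
  = (1 + y) ^+ l * (y^-1) ^+ (l - n) * (1 + s) ^+ k * (x^-1) ^+ n.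
  rewrite !exprVn; field; rewrite ?P0 ?K0 ?expf_neq0 ?gt_eqF //.
have a_def : exists a, [/\ x^-1 = 1 - a, 0 <= a & a * (1 + 2 * s) = 2 * s].
  exists (2 * s / x); split.
  - by rewrite /x; field; rewrite -/x gt_eqF.
  - by apply: divr_ge0; [apply: mulr_ge0; lra | exact: ltW].
  - by rewrite /x; field; rewrite -/x gt_eqF.
have [a [xa a0 ha]] := a_def.
have s0' : 0 <= s := ltW s0.
have h1 : (1 + y) ^+ l <= expR (l%:R * y).
  by apply: pow_expR; [rewrite addr_ge0 // ltW| exact: expR_ge1Dx].
have h2 : (y^-1) ^+ (l - n) <= expR ((l - n)%:R * y^-1).
  apply: pow_expR; first by rewrite invr_ge0 ltW.
  apply: le_trans (expR_ge1Dx _); lra.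
have h3 : (1 + s) ^+ k <= expR (k%:R * s).
  by apply: pow_expR; [lra | exact: expR_ge1Dx].
have h4 : (x^-1) ^+ n <= expR (n%:R * - a).
  apply: pow_expR; first by rewrite invr_ge0 ltW.
  rewrite xa; exact: expR_ge1Dx.
apply: le_trans (_ : expR (l%:R * y) * expR ((l - n)%:R * y^-1) * expR (k%:R * s) * expR (n%:R * - a) <= _).
  have n1 : 0 <= (1 + y) ^+ l by rewrite exprn_ge0 // addr_ge0 // ltW.
  have n2 : 0 <= (y^-1) ^+ (l - n) by rewrite exprn_ge0 // invr_ge0 ltW.
  have n3 : 0 <= (1 + s) ^+ k by rewrite exprn_ge0 // addr_ge0.
  have n4 : 0 <= (x^-1) ^+ n by rewrite exprn_ge0 // invr_ge0 ltW.
  apply: ler_pM => //; first by rewrite !mulr_ge0.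
  apply: ler_pM => //; first by rewrite !mulr_ge0.
  by apply: ler_pM.
rewrite -!expRD ler_expR.
have e1 : (l - n)%:R * y^-1 <= s^+2 * l%:R.
  have -> : s ^+ 2 * l%:R = (s^+4 * l%:R) * y^-1 by rewrite /y; field; rewrite ?expf_neq0 ?gt_eqF.
  by apply: ler_wpM2r => //; rewrite invr_ge0 ltW.
have e2 : k%:R * s <= 2 * l%:R * (1 - (s ^+ 4 + 4 * s)) * s by apply: ler_wpM2r.
have e3 : n%:R * - a <= l%:R * (1 - s ^+ 4) * - a.
  by rewrite !mulrN lerN2; apply: ler_wpM2r.
have PI := poly_ineq s0 ha.
have l0 : 0 <= l%:R :> R by [].
have e4 : l%:R * (-4 * s^+2 + 2*s - 2*s^+5 - (1 - s^+4) * a) <= 0.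
  by rewrite mulr_ge0_le0.
have ee : l%:R * y + s ^+ 2 * l%:R + 2 * l%:R * (1 - (s ^+ 4 + 4 * s)) * s + l%:R * (1 - s ^+ 4) * - a
   = l%:R * (-4 * s^+2 + 2*s - 2*s^+5 - (1 - s^+4) * a) - 2 * s ^+ 2 * l%:R by rewrite /y; ring.
lra.
Qed.
End Fin.

Import numFieldNormedType.Exports.
Local Open Scope classical_set_scope.
Local Open Scope ring_scope.

Lemma Q0 l n : (0 < n)%N -> Q l 0 n = 0%N.
Proof.
move=> n0; rewrite /Q big1 // => y _; rewrite big1 // => z _.
have := lcs_le z y; rewrite size_tuple leqn0 => /eqP ->.
by rewrite leqNgt n0.
Qed.

Theorem lemma7 (R : realType) :
  exists delta : R -> R,
    delta x @[x --> 0^'] --> 0 /\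
    forall eps : R, 0 < eps < 1 ->
      exists c C : R, 0 < c /\ 0 < C /\
        forall l : nat, (0 < l)%N ->
          let k := Num.truncn (2 * l%:R * (1 - delta eps)) in
          prob R (fun w : Omega l k => l%:R * (1 - eps) < (La w)%:R)
            <= C * expR (- (c * l%:R)).
Proof.
exists (fun e => e + 4 * Num.sqrt (Num.sqrt e)); split.
  apply: cvg_within_filter.
  have hc : (fun e : R => e + 4 * Num.sqrt (Num.sqrt e)) x @[x --> (0:R)] --> (0:R) + 4 * Num.sqrt (Num.sqrt 0).
    apply: cvgD; first exact: cvg_id.
    apply: cvgMr.
    apply: (continuous_comp (f := Num.sqrt) (g := Num.sqrt)); exact: sqrt_continuous.
  by rewrite !sqrtr0 mulr0 addr0 in hc.
move=> eps /andP[e0 e1].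
set s := Num.sqrt (Num.sqrt eps).
have s0 : 0 < s by rewrite sqrtr_gt0 sqrtr_gt0.
have s4 : s ^+ 4 = eps.
  by rewrite (_ : 4%N = (2 * 2)%N) // exprM sqr_sqrtr ?sqr_sqrtr // ?sqrtr_ge0 // ltW.
have s1 : s < 1.
  rewrite ltNge; apply/negP => h; have := exprn_ege1 4 h; rewrite s4; lra.
exists (2 * s ^+ 2), 1; split; first by rewrite mulr_gt0 // exprn_gt0.
split; first by [].
move=> l l0 /=; set k := Num.truncn _; rewrite mul1r.
set n := (Num.truncn (l%:R * (1 - eps))).+1.
have x0 : 0 <= l%:R * (1 - eps) :> R by rewrite mulr_ge0 // subr_ge0 ltW.
have HP : forall w : Omega l k, l%:R * (1 - eps) < (La w)%:R -> (n <= La w)%N.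
  by move=> w h; rewrite /n truncn_lt_nat.
apply: le_trans (prob_le R HP) _.
have n0 : (0 < n)%N by [].
have hn : l%:R * (1 - s ^+ 4) <= n%:R.
  by rewrite s4; apply: ltW; rewrite -truncn_lt_nat.
have hln : ((l - n)%N)%:R <= s ^+ 4 * l%:R.
  case: (leqP n l) => h.
    rewrite natrB //; move: hn; rewrite mulrBr mulr1; lra.
  by move/ltnW: h; rewrite -subn_eq0 => /eqP ->; rewrite mulr_ge0 // exprn_ge0 // ltW.
have [hk|hk] := lerP 0 (2 * l%:R * (1 - (eps + 4 * s))).
  have hk' : k%:R <= 2 * l%:R * (1 - (s ^+ 4 + 4 * s)) by rewrite s4 truncn_le.
  apply: le_trans (final_bound _ hln hn hk'); last by rewrite s1 s0.
  apply: ler_wpM2r; first by rewrite invr_ge0.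
  apply: Q_le; first by lra.
  by rewrite exprn_gt0.
have k0 : k = 0%N.
  by apply/eqP; rewrite -leqn0 leqNgt truncn_gt0 -ltNge; apply: lt_le_trans hk _.
rewrite k0 Q0 // mul0r; exact: ltW (expR_gt0 _).
Qed.
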